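(* Let $C_2\subseteq C_1\subseteq\mathbb{F}_2^n$ be linear codes with bases $\beta_2\subseteq\beta_1$, respectively, $Q=Q(C_1,C_2)$ the corresponding CSS code, $\beta_1\setminus\beta_2=\{w_1,\ldots,w_K\}$ (used as encoding), and $N=2^\ell$ ($\ell$ a positive integer). Then: (1) $(1,\ldots,1)\in T_N$ if and only if $wt\left(u+\sum_{i=1}^K v_iw_i\right)\equiv\sum_{i=1}^K v_i\, wt(w_i)\pmod N$ for all $u\in C_2$ and $v\in\mathbb{F}_2^K$; (2) $(1,\ldots,1)\in T_N$ and the logical action of $U(1,\ldots,1)$ is $U(1)^{\otimes K}$ if and only if $wt\left(u+\sum_{i=1}^K v_iw_i\right)\equiv\sum_{i=1}^K v_i\pmod N$ for all $u\in C_2$ and $v\in\mathbb{F}_2^K$; (3) $(1,\ldots,1)\in Id_N$ if and only if $C_1$ is an $N$-divisible code.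
   Context: $wt$ denotes Hamming weight; sums $u+\sum v_iw_i$ are in $\mathbb{F}_2^n$ while $\sum_i v_i wt(w_i)$ and $\sum_iv_i$ are integers. A code is $N$-divisible if $N$ divides the weight of every codeword. $\omega=e^{2\pi\mathbf{i}/N}$, $U(a)=\mathrm{diag}(1,\omega^a)$, $U(b)=\bigotimes_iU(b_i)$ for $b\in\mathbb{Z}_N^n$. $Q(C_1,C_2)$ is the subspace of $(\mathbb{C}^2)^{\otimes n}$ stabilized by all $X(u)Z(v)$, $u\in C_2$, $v\in C_1^\perp$. Logical states are $|v\rangle_L=|C_2|^{-1/2}\sum_{u\in C_2}|u+\sum_iv_iw_i\rangle$, $v\in\mathbb{F}_2^K$; the logical action of $U$ with $UQ=Q$ is $\mathcal{E}^{-1}U\mathcal{E}$ on $(\mathbb{C}^2)^{\otimes K}$, $\mathcal{E}:|v\rangle\mapsto|v\rangle_L$. $H_N=\{b\in\mathbb{Z}_N^n:U(b)Q=Q\}$; $T_N=\{b\in H_N:$ the logical action of $U(b)$ equals $\bigotimes_{i=1}^KE_i$ for some unitaries $E_i\in\mathbb{C}^{2\times2}\}$; $Id_N=\{b\in H_N:U(b)x=x\ \forall x\in Q\}$. *)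

(* Defs.v *)
From HB Require Import structures.
From mathcomp Require Import all_boot all_order all_algebra all_field.
Set Implicit Arguments. Unset Strict Implicit. Unset Printing Implicit Defensive.
Import Order.TTheory GRing.Theory Num.Theory.
Local Open Scope ring_scope.

Notation bvec n := 'rV['F_2]_n.

(* a state of n qubits: coefficients w.r.t. the computational basis |x>, x in F_2^n *)
Definition state (n : nat) := {ffun bvec n -> algC}.

Definition wt n (x : bvec n) : nat := #|[set i | x 0 i != 0]|.

Definition dotF2 n (u v : bvec n) : 'F_2 := \sum_(i < n) u 0 i * v 0 i.

Definition Xop n (u : bvec n) (psi : state n) : state n :=
  [ffun x : bvec n => psi (x + u)].
Definition Zop n (v : bvec n) (psi : state n) : state n :=
  [ffun x : bvec n => (if dotF2 v x == 0 then 1 else -1) * psi x].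

Definition in_dual n (C : {vspace bvec n}) (v : bvec n) : Prop :=
  forall c, c \in C -> dotF2 c v = 0.

Definition inQ n (C1 C2 : {vspace bvec n}) (psi : state n) : Prop :=
  forall u v, u \in C2 -> in_dual C1 v -> Xop u (Zop v psi) = psi.

(* omega = e^{2 pi i / N}; for N even, (N/2).-root (-1) is exactly e^{2 pi i/N}
   (the N/2-th root of -1 of minimal non-negative argument). *)
Definition omega (N : nat) : algC := (N./2).-root (-1).

(* U(b) = tensor_i diag(1, omega^{b_i}),  b in Z_N^n *)
Definition Uop N n (b : 'I_n -> 'Z_N) (psi : state n) : state n :=
  [ffun x : bvec n => (\prod_(i < n) (if x 0 i == 0 then 1 else omega N ^+ (b i : nat))) * psi x].

Definition Umat N (a : nat) : 'M[algC]_2 :=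
  \matrix_(i < 2, j < 2) (if i == j then (if i == ord0 then 1 else omega N ^+ a) else 0).

Definition ones N n : 'I_n -> 'Z_N := fun _ => 1%R.

(* encoding E : |v> |-> |v>_L = |C2|^{-1/2} sum_{u in C2} |u + sum_i v_i w_i> *)
Definition lincomb n K (w : K.-tuple (bvec n)) (v : bvec K) : bvec n :=
  \sum_(i < K) v 0 i *: tnth w i.

Definition Enc n K (C2 : {vspace bvec n}) (w : K.-tuple (bvec n)) (phi : state K)
  : state n :=
  [ffun x : bvec n => sqrtC (#|[set y : bvec n | y \in C2]|%:R)^-1 *
     \sum_(v : bvec K) (if (x - lincomb w v) \in C2 then phi v else 0)].

(* "the logical action of U (with UQ = Q) is L", i.e. E^{-1} U E = L *)
Definition logical_is n K (C2 : {vspace bvec n}) (w : K.-tuple (bvec n))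
  (U : state n -> state n) (L : state K -> state K) : Prop :=
  forall phi, U (Enc C2 w phi) = Enc C2 w (L phi).

Definition bit (a : 'F_2) : 'I_2 := if a == 0 then ord0 else ord_max.

Definition tensor K (E : 'I_K -> 'M[algC]_2) (phi : state K) : state K :=
  [ffun v : bvec K => \sum_(v' : bvec K)
       (\prod_(i < K) E i (bit (v 0 i)) (bit (v' 0 i))) * phi v'].

Definition unitary (E : 'M[algC]_2) : Prop := E *m (map_mx (@Num.conj algC) E)^T = 1%:M.

Definition inH N n (C1 C2 : {vspace bvec n}) (b : 'I_n -> 'Z_N) : Prop :=
  (forall psi, inQ C1 C2 psi -> inQ C1 C2 (Uop b psi)) /\
  (forall phi, inQ C1 C2 phi -> exists psi, inQ C1 C2 psi /\ Uop b psi = phi).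

Definition inT N n K (C1 C2 : {vspace bvec n}) (w : K.-tuple (bvec n))
  (b : 'I_n -> 'Z_N) : Prop :=
  inH C1 C2 b /\
  exists E : 'I_K -> 'M[algC]_2,
    (forall i, unitary (E i)) /\ logical_is C2 w (Uop b) (tensor E).

Definition inId N n (C1 C2 : {vspace bvec n}) (b : 'I_n -> 'Z_N) : Prop :=
  inH C1 C2 b /\ (forall psi, inQ C1 C2 psi -> Uop b psi = psi).

Definition divisible_code n (N : nat) (C : {vspace bvec n}) : Prop :=
  forall c, c \in C -> (N %| wt c)%N.

(* Main.v *)
Require Import Defs.
From HB Require Import structures.
From mathcomp Require Import all_boot all_order all_algebra all_field.
Import Order.TTheory GRing.Theory Num.Theory.
Local Open Scope ring_scope.
Set Implicit Arguments. Unset Strict Implicit.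

Lemma F2_cases (a : 'F_2) : a = 0 \/ a = 1.
Proof. by case: a => [[|[|//]]] /= H; [left|right]; apply: val_inj. Qed.

Section Om.
Variable l : nat.
Hypothesis hl : (0 < l)%N.
Local Notation N := (2 ^ l)%N.

Lemma half_N : (N./2 = 2 ^ l.-1)%N.
Proof. by rewrite -(prednK hl) expnS mul2n doubleK. Qed.

Lemma omega_half : omega N ^+ (2 ^ l.-1) = -1.
Proof. by rewrite /omega half_N rootCK // expn_gt0. Qed.

Lemma omega_N : omega N ^+ N = 1.
Proof.
by rewrite -{2}(prednK hl) expnS mulnC exprM omega_half expr2 mulrNN mulr1.
Qed.

Lemma omega_prim : N.-primitive_root (omega N).
Proof.
have [m pm dm] := prim_order_exists (expn_gt0 2 l) omega_N.
have [j jl mj] := elimT (@dvdn_pfactor 2 m l isT) dm.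
suff ejl : j = l by move: pm; rewrite mj ejl.
apply/eqP; rewrite eqn_leq jl /= leqNgt; apply/negP => jl'.
have : (m %| 2 ^ l.-1)%N.
  by rewrite mj; apply: dvdn_exp2l; rewrite -ltnS prednK.
rewrite (prim_order_dvd pm) omega_half => /eqP H.
have : (-1 : algC) != 1 by rewrite -subr_eq0 -opprD oppr_eq0 (pnatr_eq0 _ 2).
by rewrite H eqxx.
Qed.

Lemma omega_eq a b : omega N ^+ a = omega N ^+ b <-> a = b %[mod N].
Proof. by split => [/eqP|/eqP]; [rewrite (eq_prim_root_expr omega_prim) => /eqP | rewrite -(eq_prim_root_expr omega_prim) => /eqP]. Qed.

Lemma omega_neq0 : omega N != 0.
Proof.
apply/negP => /eqP H; have := omega_N; rewrite H expr0n expn_eq0 /=.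
by move=> /eqP; rewrite eq_sym oner_eq0.
Qed.

Lemma norm_omega : `|omega N| = 1.
Proof.
have : `|omega N| ^+ N = 1 by rewrite -normrX omega_N normr1.
by move/eqP; rewrite pexpr_eq1 ?expn_gt0 // => /eqP.
Qed.

Lemma val_one : nat_of_ord (1 : 'Z_N) = 1%N.
Proof. by rewrite /= modn_small. Qed.

Lemma Uop_ones n (psi : state n) x :
  Uop (@ones N n) psi x = omega N ^+ wt x * psi x.
Proof.
rewrite /Uop ffunE /ones val_one; congr (_ * _).
rewrite /wt (eq_bigr (fun i => if x 0 i != 0 then omega N else 1)); last first.
  by move=> i _; case: eqP.
by rewrite -big_mkcond /= prodr_const cardsE.
Qed.
End Om.


Lemma dotF2C n (u v : bvec n) : dotF2 u v = dotF2 v u.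
Proof. by apply: eq_bigr => i _; rewrite mulrC. Qed.

Lemma dotF2_0l n (x : bvec n) : dotF2 0 x = 0.
Proof. by apply: big1 => i _; rewrite mxE mul0r. Qed.

Lemma dual_sep n (C1 : {vspace bvec n}) x :
  x \notin C1 -> exists v, in_dual C1 v /\ dotF2 v x != 0.
Proof.
move=> hx.
set X := vbasis C1.
have [/eqP spX _] := andP (vbasisP C1).
pose A : 'M['F_2]_(\dim C1, n) := \matrix_(i < \dim C1) tnth X i.
have inC1 (D : 'rV_(\dim C1)) : D *m A \in C1.
  have memX y : y \in <<X>>%VS -> y \in C1 by rewrite spX.
  rewrite mulmx_sum_row; apply: memX; apply: memv_suml => i _; apply: memvZ.
  by rewrite rowK; apply: memv_span; apply: mem_tnth.
have nA : ~~ (x <= A)%MS.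
  by apply: contra hx => /submxP [D ->].
rewrite submxE in nA.
have [j Hj] : exists j, (x *m cokermx A) 0 j != 0.
  apply/existsP; apply: contraR nA => /existsPn H; apply/eqP/rowP => j.
  by have := H j; rewrite negbK => /eqP ->; rewrite mxE.
exists (\row_i (cokermx A) i j); split; last first.
  rewrite dotF2C /dotF2; move: Hj; rewrite mxE.
  by rewrite (eq_bigr (fun i => x 0 i * (\row_i0 cokermx A i0 j) 0 i)) // => i _; rewrite mxE.
move=> c hc.
have -> : c = (\row_i coord X i c) *m A.
  rewrite mulmx_sum_row {1}(coord_span (_ : c \in <<X>>%VS)) ?spX //.
  by apply: eq_bigr => i _; rewrite rowK mxE (tnth_nth 0).
apply: (@eq_trans _ _ (((\row_i coord X i c) *m A *m cokermx A) 0 j)).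
  by rewrite /dotF2 [RHS]mxE; apply: eq_bigr => i _; rewrite [X in _ * X]mxE.
by rewrite -mulmxA mulmx_coker mulmx0 mxE.
Qed.

Section Q.
Variables (n : nat) (C1 C2 : {vspace bvec n}).
Hypothesis hC : (C2 <= C1)%VS.

Lemma inQ_supp psi : inQ C1 C2 psi -> forall x, x \notin C1 -> psi x = 0.
Proof.
move=> H x hx; have [v [hv hvx]] := dual_sep hx.
have := H 0 v (mem0v _) hv; move/ffunP/(_ x); rewrite /Xop /Zop !ffunE addr0.
rewrite (negbTE hvx) mulN1r => /eqP; rewrite eqNr => /eqP //.
Qed.

Lemma inQ_inv psi : inQ C1 C2 psi -> forall x u, u \in C2 -> psi (x + u) = psi x.
Proof.
move=> H x u hu.
have := H u 0 hu (fun c _ => etrans (dotF2C c 0) (dotF2_0l c)); move/ffunP/(_ x).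
by rewrite /Xop /Zop !ffunE dotF2_0l eqxx mul1r.
Qed.

Lemma inQ_intro (psi : state n) : (forall x, x \notin C1 -> psi x = 0) ->
  (forall x u, u \in C2 -> psi (x + u) = psi x) -> inQ C1 C2 psi.
Proof.
move=> hs hi u v hu hv; apply/ffunP => x; rewrite /Xop /Zop !ffunE.
have huC1 : u \in C1 by apply: (subvP hC).
case: (boolP (x + u \in C1)) => hxu.
  by rewrite dotF2C hv // eqxx mul1r hi.
rewrite hs // mulr0 hs //; apply: contra hxu => hx; exact: memvD.
Qed.

Lemma inQ_mul (g : bvec n -> algC) (psi : state n) :
  (forall x u, x \in C1 -> u \in C2 -> g (x + u) = g x) ->
  inQ C1 C2 psi -> inQ C1 C2 [ffun x => g x * psi x].
Proof.
move=> hg hq; apply: inQ_intro => [x hx|x u hu]; rewrite !ffunE.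
  by rewrite (inQ_supp hq hx) mulr0.
rewrite (inQ_inv hq _ hu); case: (boolP (x \in C1)) => hx.
  by rewrite hg.
by rewrite (inQ_supp hq hx) !mulr0.
Qed.
End Q.



Lemma wt0 n : wt (0 : bvec n) = 0%N.
Proof. by rewrite /wt; apply/eqP; rewrite cards_eq0; apply/eqP/setP => i; rewrite !inE mxE eqxx. Qed.

Lemma bit_inj : injective bit.
Proof.
move=> a b; rewrite /bit.
by case: (F2_cases a) => ->; case: (F2_cases b) => -> //.
Qed.

Lemma row_neq K (v v' : bvec K) : v' != v -> exists i, v 0 i != v' 0 i.
Proof.
move=> h; apply/existsP; apply: contraR h => /existsPn H; apply/eqP/rowP => i.
by have := H i; rewrite negbK => /eqP.
Qed.

Lemma tensor_diag K (E : 'I_K -> 'M[algC]_2) phi v :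
  (forall i a b, a != b -> E i a b = 0) ->
  tensor E phi v = (\prod_(i < K) E i (bit (v 0 i)) (bit (v 0 i))) * phi v.
Proof.
move=> hE; rewrite /tensor ffunE (bigD1 v) //= [X in _ + X]big1 ?addr0 // => v' hv'.
have [i hi] := row_neq hv'.
rewrite (bigD1 i) //= hE ?mul0r //; apply: contra hi => /eqP /bit_inj ->.
by [].
Qed.

Lemma Umat_diag N a i j : i != j -> Umat N a i j = 0.
Proof. by move=> h; rewrite /Umat mxE (negbTE h). Qed.

Lemma Umat_bit N a c : Umat N a (bit c) (bit c) = if c == 0 then 1 else omega N ^+ a.
Proof. by rewrite /Umat mxE eqxx /bit; case: (c == 0). Qed.

Lemma prod_Umat N K (a : 'I_K -> nat) (v : bvec K) :
  \prod_(i < K) Umat N (a i) (bit (v 0 i)) (bit (v 0 i)) =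
  omega N ^+ (\sum_(i < K) (if v ord0 i == 0%R then 0 else a i))%N.
Proof.
rewrite -prodrXr; apply: eq_bigr => i _; rewrite Umat_bit.
by case: eqP.
Qed.

Lemma Umat_unitary l a : (0 < l)%N -> unitary (Umat (2 ^ l) a).
Proof.
move=> hl; rewrite /unitary; apply/matrixP => i j.
rewrite !mxE big_ord_recl big_ord1 !mxE.
have hw : omega (2 ^ l) ^+ a * (omega (2 ^ l) ^+ a)^* = 1.
  by rewrite -normCK normrX norm_omega // expr1n expr1n.
case: i => [[|[|//]]] ?; case: j => [[|[|//]]] ? /=;
  rewrite ?mxE /= ?conjC0 ?conjC1 ?mulr0 ?mul0r ?mulr1 ?addr0 ?add0r //.
Qed.

Lemma prod_UmatE N K (a : 'I_K -> nat) (E : 'I_K -> 'M[algC]_2) (v : bvec K) :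
  (forall i, E i = Umat N (a i)) ->
  \prod_(i < K) E i (bit (v 0 i)) (bit (v 0 i)) =
  omega N ^+ (\sum_(i < K) (if v ord0 i == 0%R then 0 else a i))%N.
Proof. by move=> hE; rewrite -prod_Umat; apply: eq_bigr => i _; rewrite hE. Qed.


Section Code.
Variables (n K : nat) (C1 C2 : {vspace bvec n}) (b2 : seq (bvec n)) (w : K.-tuple (bvec n)).
Hypotheses (hb2 : basis_of C2 b2) (hb1 : basis_of C1 (b2 ++ w)).

Lemma C2E : <<b2>>%VS = C2.
Proof. by case/andP: hb2 => /eqP. Qed.

Lemma C1E : (C2 + <<w>>)%VS = C1.
Proof. by case/andP: hb1 => /eqP <- _; rewrite span_cat C2E. Qed.

Lemma hC : (C2 <= C1)%VS.
Proof. by rewrite -C1E addvSl. Qed.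

Lemma lincomb_w v : lincomb w v \in <<w>>%VS.
Proof. by apply: memv_suml => i _; apply: memvZ; apply: memv_span; apply: mem_tnth. Qed.

Lemma lincomb_C1 v : lincomb w v \in C1.
Proof. by rewrite -C1E; apply: (subvP (addvSr _ _)); apply: lincomb_w. Qed.

Lemma lincombB v v' : lincomb w (v - v') = lincomb w v - lincomb w v'.
Proof.
rewrite /lincomb -sumrB; apply: eq_bigr => i _; by rewrite !mxE scalerBl.
Qed.

Lemma lincomb_uniq d : lincomb w d \in C2 -> d = 0.
Proof.
move=> hd.
case/andP: hb1 => _; rewrite cat_free => /and3P [_ fw /directv_addP dir].
have : lincomb w d \in (<<b2>> :&: <<w>>)%VS by rewrite memv_cap C2E hd lincomb_w.
rewrite dir memv0 => /eqP h0.
apply/rowP => i; rewrite mxE.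
apply: ((freeP fw) (fun i => d 0 i)); rewrite -[RHS]h0 /lincomb.
by apply: eq_bigr => j _; rewrite (tnth_nth 0).
Qed.

Lemma decomp x : x \in C1 -> exists u v, u \in C2 /\ x = u + lincomb w v.
Proof.
rewrite -C1E => /memv_addP [u hu [z hz ->]].
exists u, (\row_i coord w i z); split => //; congr (_ + _).
rewrite {1}(coord_span hz) /lincomb; apply: eq_bigr => i _.
by rewrite mxE (tnth_nth 0).
Qed.

Definition sC := sqrtC (#|[set y : bvec n | y \in C2]|%:R)^-1 : algC.

Lemma sC_neq0 : sC != 0.
Proof.
rewrite /sC sqrtC_eq0 invr_eq0 pnatr_eq0 -lt0n; apply/card_gt0P.
by exists 0; rewrite inE mem0v.
Qed.

Lemma Enc_at (phi : state K) u v : u \in C2 -> Enc C2 w phi (u + lincomb w v) = sC * phi v.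
Proof.
move=> hu; rewrite /Enc ffunE; congr (_ * _).
rewrite (bigD1 v) //= addrK hu [X in _ + X]big1 ?addr0 // => v' hv'.
case: ifP => // h; exfalso; move/negP: hv'; apply.
have : lincomb w (v - v') \in C2.
  rewrite lincombB.
  have -> : lincomb w v - lincomb w v' = (u + lincomb w v - lincomb w v') - u.
    by rewrite addrAC [u + _]addrC addrK.
  by rewrite rpredB.
by move/lincomb_uniq/eqP; rewrite subr_eq0 eq_sym.
Qed.

Variables (l : nat) (hl : (0 < l)%N).
Local Notation N := (2 ^ l)%N.

Lemma zero_ord0 : (0 : 'I_1) = ord0. Proof. by []. Qed.

Lemma logical_extract (E : 'I_K -> 'M[algC]_2) :
  logical_is C2 w (Uop (@ones N n)) (tensor E) ->
  forall u v, u \in C2 -> omega N ^+ wt (u + lincomb w v) =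
     \prod_(i < K) E i (bit (v 0 i)) (bit (v 0 i)).
Proof.
move=> H u v hu.
pose d : state K := [ffun v' : bvec K => if v' == v then 1 else 0 : algC].
have dE v' : d v' = if v' == v then 1 else 0 by rewrite ffunE.
clearbody d.
move/ffunP/(_ (u + lincomb w v)): (H d).
have e1 := dE v; rewrite eqxx in e1.
rewrite Uop_ones // !Enc_at // e1 mulr1.
rewrite /tensor ffunE (bigD1 v) //= [X in _ = sC * (_ + X)]big1 ?addr0 => [|v' hv']; last first.
  by rewrite (dE v') (negbTE hv') mulr0.
rewrite e1 mulr1 mulrC; apply: mulfI; exact: sC_neq0.
Qed.

Lemma logical_build (E : 'I_K -> 'M[algC]_2) :
  (forall i a b, a != b -> E i a b = 0) ->
  (forall u v, u \in C2 -> omega N ^+ wt (u + lincomb w v) =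
     \prod_(i < K) E i (bit (v 0 i)) (bit (v 0 i))) ->
  logical_is C2 w (Uop (@ones N n)) (tensor E).
Proof.
move=> hE hP phi; apply/ffunP => x; rewrite Uop_ones // /Enc !ffunE mulrCA.
congr (_ * _); rewrite mulr_sumr; apply: eq_bigr => v _.
case: ifP => h; last by rewrite mulr0.
by rewrite tensor_diag // -{1}(subrK (lincomb w v) x) hP.
Qed.

Lemma inH_ones : (forall x u, x \in C1 -> u \in C2 -> omega N ^+ wt (x + u) = omega N ^+ wt x) ->
  inH C1 C2 (@ones N n).
Proof.
move=> hinv.
have Ue psi : Uop (@ones N n) psi = [ffun x => omega N ^+ wt x * psi x].
  by apply/ffunP => x; rewrite Uop_ones // ffunE.
split.
  by move=> psi hq; rewrite Ue; exact: (@inQ_mul _ _ _ hC (fun x => omega N ^+ wt x) _ hinv hq).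
move=> phi hq; exists [ffun x => (omega N ^+ wt x)^-1 * phi x]; split.
  apply: (@inQ_mul _ _ _ hC (fun x => (omega N ^+ wt x)^-1) _ _ hq) => x u hx hu.
  by rewrite hinv.
apply/ffunP => x; rewrite Uop_ones // ffunE mulrA divff ?mul1r //.
by rewrite expf_neq0 // omega_neq0.
Qed.

Lemma inv_of (f : bvec K -> nat) :
  (forall u v, u \in C2 -> wt (u + lincomb w v) = f v %[mod N]) ->
  forall x u, x \in C1 -> u \in C2 -> omega N ^+ wt (x + u) = omega N ^+ wt x.
Proof.
move=> hf x u hx hu; have [u' [v [hu' ->]]] := decomp hx.
apply/omega_eq => //; by rewrite addrAC (hf (u' + u)) ?rpredD // (hf u').
Qed.

Definition delta j : bvec K := \row_i (if i == j then 1 else 0).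

Lemma lincomb_delta j : lincomb w (delta j) = tnth w j.
Proof.
rewrite /lincomb (bigD1 j) //= big1 => [|i hi]; rewrite mxE.
  by rewrite eqxx scale1r addr0.
by rewrite (negbTE hi) scale0r.
Qed.

Lemma lincomb0 : lincomb w 0 = 0.
Proof. by apply: big1 => i _; rewrite mxE scale0r. Qed.

Lemma extract_weights (E : 'I_K -> 'M[algC]_2) :
  (forall u v, u \in C2 -> omega N ^+ wt (u + lincomb w v) =
     \prod_(i < K) E i (bit (v 0 i)) (bit (v 0 i))) ->
  forall u v, u \in C2 -> omega N ^+ wt (u + lincomb w v) =
     omega N ^+ (\sum_(i < K) (if v ord0 i == 0%R then 0 else wt (tnth w i)))%N.
Proof.
move=> hP.
have h0 : \prod_(i < K) E i (bit 0) (bit 0) = 1.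
  have := hP 0 0 (mem0v _); rewrite lincomb0 addr0 wt0 expr0 => h.
  rewrite [RHS]h; apply: eq_bigr => i _; by rewrite mxE.
have nz i : E i (bit 0) (bit 0) != 0.
  apply/negP => /eqP z; move: h0; rewrite (bigD1 i) //= z mul0r => /eqP.
  by rewrite eq_sym oner_eq0.
pose r i := E i (bit 1) (bit 1) / E i (bit 0) (bit 0).
have hsplit (v : bvec K) : \prod_(i < K) E i (bit (v 0 i)) (bit (v 0 i)) =
    \prod_(i < K) (if v 0 i == 0 then 1 else r i).
  transitivity (\prod_(i < K) (E i (bit 0) (bit 0) * (if v 0 i == 0 then 1 else r i))).
    apply: eq_bigr => i _; case: (F2_cases (v 0 i)) => ->; rewrite ?eqxx ?mulr1 //.
    by rewrite oner_eq0 mulrC divfK.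
  by rewrite big_split /= h0 mul1r.
have hr j : r j = omega N ^+ wt (tnth w j).
  have := hP 0 (delta j) (mem0v _); rewrite add0r lincomb_delta => ->.
  rewrite hsplit (bigD1 j) //= big1 => [|i hi]; rewrite mxE.
    by rewrite eqxx oner_eq0 mulr1.
  by rewrite (negbTE hi) eqxx.
move=> u v hu; rewrite hP // hsplit -prodrXr; apply: eq_bigr => i _.
by rewrite hr; case: eqP.
Qed.

End Code.


Unset Implicit Arguments. Set Strict Implicit.

Theorem corollary3p17 (n K l : nat) (C1 C2 : {vspace bvec n})
  (b2 : seq (bvec n)) (w : K.-tuple (bvec n))
  (hb2 : basis_of C2 b2) (hb1 : basis_of C1 (b2 ++ w)) (hl : (0 < l)%N) :
  let N := (2 ^ l)%N in
  [/\ inT C1 C2 w (@ones N n) <->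
        (forall u (v : bvec K), u \in C2 ->
           wt (u + lincomb w v) = (\sum_(i < K) (if v ord0 i == 0%R then 0 else wt (tnth w i)))%N
             %[mod N]),
      (inT C1 C2 w (@ones N n) /\
         logical_is C2 w (Uop (@ones N n)) (tensor (fun _ : 'I_K => Umat N 1))) <->
        (forall u (v : bvec K), u \in C2 ->
           wt (u + lincomb w v) = (\sum_(i < K) (if v ord0 i == 0%R then 0 else 1))%N
             %[mod N])
    & inId C1 C2 (@ones N n) <-> divisible_code N C1].
Proof.
move=> N.
have hC2 := hC hb2 hb1.
split.
- split.
    move=> [_ [E [_ hL]]] u v hu.
    have hP := logical_extract hb2 hb1 hL.
    by apply/(omega_eq hl); apply: (extract_weights hP).
  move=> hcond; split.
    by apply: (inH_ones hb2 hb1 hl); apply: (inv_of hb2 hb1 hl hcond).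
  exists (fun i => Umat N (wt (tnth w i))); split.
    by move=> i; apply: Umat_unitary.
  apply: logical_build => [i a b hab|u v hu]; first exact: Umat_diag.
  by rewrite (@prod_UmatE N K (fun i => wt (tnth w i)) (fun i => Umat N (wt (tnth w i)))) //; apply/(omega_eq hl); apply: hcond.
- split.
    move=> [_ hL] u v hu.
    have hP := logical_extract hb2 hb1 hL.
    apply/(omega_eq hl); rewrite hP //.
    exact: (@prod_UmatE N K (fun _ => 1%N) (fun _ => Umat N 1) v (fun _ => erefl)).
  move=> hcond.
  have hLog : logical_is C2 w (Uop (@ones N n)) (tensor (fun _ : 'I_K => Umat N 1)).
    apply: logical_build => [i a b hab|u v hu]; first exact: Umat_diag.
    by rewrite (@prod_UmatE N K (fun i => 1%N) (fun _ => Umat N 1)) //; apply/(omega_eq hl); apply: hcond.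
  split => //; split.
    by apply: (inH_ones hb2 hb1 hl); apply: (inv_of hb2 hb1 hl hcond).
  by exists (fun _ => Umat N 1); split => // i; apply: Umat_unitary.
- have w1 y : (N %| wt y)%N -> omega N ^+ wt y = 1.
    move=> hy; rewrite -(expr0 (omega N)); apply/(omega_eq hl).
    by rewrite mod0n; apply/eqP.
  split.
    move=> [_ hId] c hc.
    pose psi : state n := [ffun x => if x - c \in C2 then 1 else 0].
    have psiE x : psi x = if x - c \in C2 then 1 else 0 by rewrite ffunE.
    clearbody psi.
    have hq : inQ C1 C2 psi.
      apply: (inQ_intro hC2) => [x hx|x u hu]; rewrite !psiE.
        case: ifP => // h; exfalso; move/negP: hx; apply.
        by rewrite -(subrK c x) memvD // (subvP hC2).
      by rewrite addrAC rpredDr.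
    move/ffunP/(_ c): (hId psi hq); rewrite Uop_ones // !psiE subrr mem0v mulr1.
    rewrite -(expr0 (omega N)) => /(omega_eq hl); rewrite mod0n => h.
    by apply/eqP.
  move=> hdiv; split.
    apply: (inH_ones hb2 hb1 hl) => x u hx hu.
    by rewrite !w1 // hdiv // memvD // (subvP hC2).
  move=> psi hq; apply/ffunP => x; rewrite Uop_ones //.
  case: (boolP (x \in C1)) => hx; first by rewrite w1 ?mul1r // hdiv.
  by rewrite (inQ_supp hq hx) mulr0.
Qed.
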